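(* If $G$ is a regular graph on $d+2$ vertices that is not a complete multipartite graph, then $G$ has a spherical representation in $\mathbb{R}^d$.
   Context: Graphs are finite and simple. A finite set $S\subset\mathbb{R}^d$ is a 2-distance set if $\{\|p-q\| : p,q\in S, p\neq q\}$ has exactly two elements $\alpha_1>\alpha_2$; its associated graph has vertex set $S$ with $p,q$ adjacent iff $\|p-q\|=\alpha_1$. $G$ has a spherical representation in $\mathbb{R}^d$ if some 2-distance set in $\mathbb{R}^d$ lying on a $(d-1)$-dimensional sphere has associated graph $G$. *)

(* Defs.v *)
From HB Require Import structures.
From mathcomp Require Import all_boot all_order all_algebra.
From mathcomp Require Import reals.
Set Implicit Arguments. Unset Strict Implicit. Unset Printing Implicit Defensive.
Import Order.TTheory GRing.Theory Num.Theory.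
Local Open Scope ring_scope.

Definition simple_graph (V : finType) (adj : rel V) : Prop :=
  (forall u, ~~ adj u u) /\ (forall u v, adj u v = adj v u).

Definition degree (V : finType) (adj : rel V) (v : V) : nat := #|[set u | adj v u]|.
Definition regular (V : finType) (adj : rel V) : Prop :=
  exists k : nat, forall v, degree adj v = k.

(* Complete multipartite: the vertex set is partitioned into parts
   (given by a labelling f), and u,v are adjacent iff they lie in different parts. *)
Definition complete_multipartite (V : finType) (adj : rel V) : Prop :=
  exists f : V -> nat, forall u v, adj u v = (f u != f v).

Definition edist (R : realType) (d : nat) (x y : 'rV[R]_d) : R :=
  Num.sqrt (\sum_(i < d) (x ord0 i - y ord0 i) ^+ 2).

(* Spherical representation in R^d: an injective placement p of the vertices
   (so p(V) is a set S with |S| = |V|), lying on a sphere of positive radius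
   (a (d-1)-sphere), whose set of mutual distances is exactly {a1, a2} with
   a1 > a2, and with u ~ v iff ||p u - p v|| = a1. *)
Definition spherical_representation (R : realType) (d : nat)
    (V : finType) (adj : rel V) : Prop :=
  exists p : V -> 'rV[R]_d,
    injective p /\
    (exists (c : 'rV[R]_d) (r : R), 0 < r /\ forall v, edist (p v) c = r) /\
    exists a1 a2 : R,
      a2 < a1 /\
      (forall u v, u != v -> edist (p u) (p v) = a1 \/ edist (p u) (p v) = a2) /\
      (exists u v, u != v /\ edist (p u) (p v) = a1) /\
      (exists u v, u != v /\ edist (p u) (p v) = a2) /\
      (forall u v, u != v -> (adj u v <-> edist (p u) (p v) = a1)).

(* Main.v *)
Require Import Defs.
From HB Require Import structures.
From mathcomp Require Import all_boot all_order all_algebra.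
From mathcomp Require Import reals.
From mathcomp Require Import ring lra.
Set Implicit Arguments. Unset Strict Implicit. Unset Printing Implicit Defensive.
Import Order.TTheory GRing.Theory Num.Theory.
Local Open Scope ring_scope.

Section Alg.
Variable R : realType.
Variable I : finType.

Definition sr_dotv m (u v : 'rV[R]_m) : R := \sum_(k < m) u ord0 k * v ord0 k.
Definition sr_qf (S : {set I}) (M : I -> I -> R) (x : I -> R) :=
  \sum_(i in S) \sum_(j in S) x i * x j * M i j.
Definition sr_bf (S : {set I}) (M : I -> I -> R) (x y : I -> R) :=
  \sum_(i in S) \sum_(j in S) x i * y j * M i j.
Definition sr_psd (S : {set I}) M := forall x, 0 <= sr_qf S M x.
Definition sr_symm (M : I -> I -> R) := forall i j, M i j = M j i.
Definition sr_gram m (S : {set I}) (p : I -> 'rV[R]_m) M :=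
  forall i j, i \in S -> j \in S -> sr_dotv (p i) (p j) = M i j.

Lemma sr_dotvC m (u v : 'rV[R]_m) : sr_dotv u v = sr_dotv v u.
Proof. by apply: eq_bigr => k _; rewrite mulrC. Qed.

Lemma sr_bfC (S : {set I}) (M : I -> I -> R) x y : sr_symm M -> sr_bf S M x y = sr_bf S M y x.
Proof.
move=> sM; rewrite /sr_bf exchange_big /=; apply: eq_bigr => i _; apply: eq_bigr => j _.
by rewrite sM; ring.
Qed.

Lemma sr_qf_expand (S : {set I}) (M : I -> I -> R) x y s : sr_symm M ->
  sr_qf S M (fun i => x i + s * y i) = sr_qf S M x + s * (2 * sr_bf S M x y) + s ^+ 2 * sr_qf S M y.
Proof.
move=> sM.
have -> : 2 * sr_bf S M x y = sr_bf S M x y + sr_bf S M y x by rewrite (sr_bfC _ _ _ sM); ring.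
rewrite /sr_qf /sr_bf -big_split /= !mulr_sumr -!big_split /=.
apply: eq_bigr => i _; rewrite -!big_split /= !mulr_sumr -!big_split /=; apply: eq_bigr => j _.
ring.
Qed.

Lemma sr_quad0 (b c : R) : (forall s, 0 <= s * (2 * b) + s ^+ 2 * c) -> b = 0.
Proof.
move=> H; apply/eqP; apply: contraT => bn0.
pose D := `|c| + 1.
have D0 : 0 < D by rewrite /D ltr_pwDr // normr_ge0.
have := H (- b / D).
have hc : c <= `|c| by exact: ler_norm.
have b2 : 0 < b ^+ 2 by rewrite exprn_even_gt0.

have -> : - b / D * (2 * b) + (- b / D) ^+ 2 * c = b ^+ 2 * (c - 2 * D) / D ^+ 2.
  by field; rewrite gt_eqF.
rewrite pmulr_lge0 ?invr_gt0 ?exprn_gt0 // pmulr_rge0 //.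
move=> h; have : c - 2 * D < 0 by rewrite /D; lra.
by rewrite ltNge h.
Qed.

Lemma sr_psd_null (S : {set I}) (M : I -> I -> R) x : sr_symm M -> sr_psd S M -> sr_qf S M x = 0 -> forall y, sr_bf S M x y = 0.
Proof.
move=> sM pM qx y; apply: (@sr_quad0 _ (sr_qf S M y)) => s.
by have := pM (fun i => x i + s * y i); rewrite sr_qf_expand // qx add0r.
Qed.

Lemma sr_sum_delta (S : {set I}) j (F : I -> R) : j \in S ->
  \sum_(i in S) (i == j)%:R * F i = F j.
Proof.
move=> jS; rewrite (bigD1 j) //= eqxx mul1r big1 ?addr0 // => i /andP[_ /negbTE ->].
by rewrite mul0r.
Qed.

Lemma sr_bf_delta (S : {set I}) (M : I -> I -> R) x j : j \in S -> sr_bf S M x (fun l => (l == j)%:R) = \sum_(i in S) x i * M i j.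
Proof.
move=> jS; apply: eq_bigr => i _.
rewrite -(sr_sum_delta (fun l => x i * M i l) jS); apply: eq_bigr => l _; ring.
Qed.

Lemma sr_psd_kernel (S : {set I}) (M : I -> I -> R) x : sr_symm M -> sr_psd S M -> sr_qf S M x = 0 ->
  forall j, j \in S -> \sum_(i in S) M j i * x i = 0.
Proof.
move=> sM pM qx j jS; have := sr_psd_null sM pM qx (fun l => (l == j)%:R).
rewrite sr_bf_delta // => h; rewrite -[X in _ = X]h.
by apply: eq_bigr => i _; rewrite sM mulrC.
Qed.

Lemma sr_psd_diag0 (S : {set I}) (M : I -> I -> R) i0 j : sr_symm M -> sr_psd S M -> i0 \in S -> j \in S -> M i0 i0 = 0 -> M i0 j = 0.
Proof.
move=> sM pM i0S jS m0.
have q0 : sr_qf S M (fun l => (l == i0)%:R) = 0.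
  rewrite /sr_qf (eq_bigr (fun i => (i == i0)%:R * \sum_(j in S) (j == i0)%:R * M i j)).
    by rewrite (sr_sum_delta _ i0S) (sr_sum_delta _ i0S).
  by move=> i _; rewrite mulr_sumr; apply: eq_bigr => l _; ring.
have := sr_psd_null sM pM q0 (fun l => (l == j)%:R); rewrite sr_bf_delta // => h.
by rewrite -h (sr_sum_delta (fun i => M i j) i0S).
Qed.

Lemma sr_psd_sub (S T : {set I}) (M : I -> I -> R) : S \subset T -> sr_psd T M -> sr_psd S M.
Proof.
move=> sST pM x; have := pM (fun i => if i \in S then x i else 0).
rewrite /sr_qf; rewrite (big_setID S) /= (setIidPr sST) [X in _ + X]big1 ?addr0.
  congr (_ <= _); apply: eq_bigr => i iS; rewrite (big_setID S) /= (setIidPr sST).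
  rewrite [X in _ + X]big1 ?addr0; first by apply: eq_bigr => j jS; rewrite iS jS.
  by move=> j /setDP[_ /negbTE ->]; rewrite mulr0 mul0r.
move=> i /setDP[_ /negbTE ->]; rewrite big1 // => j _; by rewrite !mul0r.
Qed.


Lemma sr_qf_delta (S : {set I}) (M : I -> I -> R) i0 : i0 \in S ->
  sr_qf S M (fun l => (l == i0)%:R) = M i0 i0.
Proof.
move=> i0S.
rewrite /sr_qf (eq_bigr (fun i => (i == i0)%:R * \sum_(j in S) (j == i0)%:R * M i j)).
  by rewrite (sr_sum_delta _ i0S) (sr_sum_delta _ i0S).
by move=> i _; rewrite mulr_sumr; apply: eq_bigr => l _; ring.
Qed.

Lemma sr_dotv_row m (a1 a2 : 'rV[R]_1) (b1 b2 : 'rV[R]_m) :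
  sr_dotv (row_mx a1 b1) (row_mx a2 b2) = a1 ord0 ord0 * a2 ord0 ord0 + sr_dotv b1 b2.
Proof.
rewrite /sr_dotv big_split_ord /= big_ord1.
congr (_ + _); first by rewrite !(@row_mxEl _ 1 1).
by apply: eq_bigr => k _; rewrite !(@row_mxEr _ 1 1).
Qed.

Lemma sr_dotvZ m a (u v : 'rV[R]_m) : sr_dotv (a *: u) v = a * sr_dotv u v.
Proof. by rewrite /sr_dotv mulr_sumr; apply: eq_bigr => k _; rewrite mxE mulrA. Qed.

Lemma sr_dotv_suml m (S : {set I}) (c : I -> R) (q : I -> 'rV[R]_m) v :
  sr_dotv (\sum_(j in S) c j *: q j) v = \sum_(j in S) c j * sr_dotv (q j) v.
Proof.
rewrite /sr_dotv (eq_bigr (fun k => \sum_(j in S) c j * q j ord0 k * v ord0 k)).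
  rewrite exchange_big /=; apply: eq_bigr => j _; rewrite mulr_sumr.
  by apply: eq_bigr => k _; rewrite mulrA.
by move=> k _; rewrite summxE mulr_suml; apply: eq_bigr => j _; rewrite mxE.
Qed.

Lemma sr_dotv0 m (v : 'rV[R]_m) : sr_dotv 0 v = 0.
Proof. by rewrite /sr_dotv big1 // => k _; rewrite mxE mul0r. Qed.

Lemma sr_chol m : forall (S : {set I}) (M : I -> I -> R), sr_symm M -> (#|S| <= m)%N -> sr_psd S M ->
  exists p : I -> 'rV[R]_m, sr_gram S p M.
Proof.
elim: m => [|m IH] S M sM.
  rewrite leqn0 cards_eq0 => /eqP -> _; exists (fun _ => 0) => i j; by rewrite inE.
have [-> _ _|[i0 i0S] cS pM] := set_0Vmem S.
  by exists (fun _ => 0) => i j; rewrite inE.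
pose a := M i0 i0. pose S' := S :\ i0.
pose M' := fun i j => M i j - M i i0 * M i0 j / a.
have sM' : sr_symm M'.
  by move=> i j; rewrite /M' (sM j i) (sM j i0) (sM i0 i); ring.
have cS' : (#|S'| <= m)%N by move: cS; rewrite (cardsD1 i0 S) i0S add1n ltnS.
have a0 : 0 <= a by have := pM (fun l => (l == i0)%:R); rewrite sr_qf_delta.
have pM' : sr_psd S' M'.
  move=> z; pose b := \sum_(j in S') M i0 j * z j.
  pose c := - b / a.
  pose z' := fun i => if i == i0 then c else z i.
  have e1 : sr_qf S M z' = c ^+ 2 * a + 2 * c * b + sr_qf S' M z.
    rewrite /sr_qf (big_setD1 i0 i0S) /= (big_setD1 i0 i0S) /=.
    rewrite /z' eqxx.
    have -> : \sum_(i in S :\ i0) \sum_(j in S) (if i == i0 then c else z i) *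
         (if j == i0 then c else z j) * M i j =
       \sum_(i in S') (z i * c * M i i0 + \sum_(j in S') z i * z j * M i j).
      apply: eq_bigr => i /setD1P[/negbTE -> _]; rewrite (big_setD1 i0 i0S) /= eqxx.
      congr (_ + _); apply: eq_bigr => j /setD1P[/negbTE -> _] //.
    have -> : \sum_(i in S :\ i0) c * (if i == i0 then c else z i) * M i0 i =
        c * b.
      rewrite /b mulr_sumr; apply: eq_bigr => i /setD1P[/negbTE -> _]; ring.
    rewrite big_split /= -/S'.
    have -> : \sum_(i in S') z i * c * M i i0 = c * b.
      rewrite /b mulr_sumr; apply: eq_bigr => i _; rewrite (sM i i0); ring.
    rewrite /a; ring.
  have e2 : sr_qf S' M' z = sr_qf S' M z - b * b / a.
    rewrite /sr_qf /M' /b mulr_suml mulr_suml -sumrB; apply: eq_bigr => i _.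
    rewrite mulr_sumr mulr_suml -sumrB; apply: eq_bigr => j _.
    rewrite (sM i i0); ring.
  have e3 : c ^+ 2 * a + 2 * c * b = - (b * b / a).
    rewrite /c; have [->|an0] := eqVneq a 0; first by rewrite invr0 !mulr0 !mul0r oppr0 addr0.
    by field.
  have := pM z'; rewrite e1 e2 -e3.
  by rewrite addrC.
have [p' gp'] := IH S' M' sM' cS' pM'.
pose s := Num.sqrt a.
have ss : s * s = a by rewrite -expr2 sqr_sqrtr.
have aux : forall j, j \in S -> M i0 j / s * s = M i0 j.
  move=> j jS; have [s0|sn0] := eqVneq s 0.
    have : a = 0 by rewrite -ss s0 mulr0.
    by move/(sr_psd_diag0 sM pM i0S jS) ->; rewrite !mul0r.
  by rewrite divfK.
exists (fun i => if i == i0 then (row_mx (s%:M) 0 : 'rV_(1 + m))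
                 else row_mx ((M i0 i / s)%:M) (p' i)).
move=> i j iS jS.
have [ei|ni] := eqVneq i i0; have [ej|nj] := eqVneq j i0.
- by rewrite sr_dotv_row !mxE /= sr_dotv0 addr0 ss ei ej.
- by rewrite ei sr_dotv_row !mxE /= sr_dotv0 addr0 mulrC aux.
- by rewrite ej sr_dotv_row !mxE /= sr_dotvC sr_dotv0 addr0 aux // sM.
- rewrite sr_dotv_row !mxE /= gp' ?inE ?ni ?nj //.
  rewrite !mulr1n /M' (sM i i0) -ss.
  have [s0|sn0] := eqVneq s 0.
    by rewrite s0 !mulr0 invr0 !mulr0 subr0 add0r.
  field; exact: sn0.
Qed.

Lemma sr_gram_extend m (M : I -> I -> R) (S : {set I}) i0 (z : I -> R) (p : I -> 'rV[R]_m) :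
  sr_symm M -> i0 \in S -> z i0 != 0 ->
  (forall i, i \in S -> \sum_(j in S) M i j * z j = 0) ->
  sr_gram (S :\ i0) p M -> exists p' : I -> 'rV[R]_m, sr_gram S p' M.
Proof.
move=> sM i0S z0 kz gp.
have ks : forall i, i \in S -> \sum_(j in S :\ i0) M i j * z j = - (M i i0 * z i0).
  move=> i iS; have := kz i iS; rewrite (big_setD1 i0 i0S) /= => h.
  by apply/eqP; rewrite -addr_eq0 addrC h.
pose q := - (z i0)^-1 *: \sum_(j in S :\ i0) z j *: p j.
have hq : forall i, i \in S :\ i0 -> sr_dotv q (p i) = M i0 i.
  move=> i iS'; rewrite /q sr_dotvZ sr_dotv_suml.
  rewrite (eq_bigr (fun j => M i j * z j)); last first.
    by move=> j jS'; rewrite gp // mulrC sM.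
  rewrite ks; last by move: iS' => /setD1P[].
  by rewrite sM; field.
exists (fun i => if i == i0 then q else p i).
move=> i j iS jS.
have [ei|ni] := eqVneq i i0; have [ej|nj] := eqVneq j i0.
- rewrite ei ej {1}/q sr_dotvZ sr_dotv_suml.
  rewrite (eq_bigr (fun j => M i0 j * z j)); last first.
    by move=> l lS'; rewrite sr_dotvC hq // mulrC.
  by rewrite ks //; field.
- by rewrite ei hq // in_setD1 nj jS.
- by rewrite ej sr_dotvC hq ?in_setD1 ?ni ?iS // sM.
- by rewrite gp ?in_setD1 ?ni ?nj ?iS ?jS.
Qed.

End Alg.

Lemma sr_not_cm_witness (V : finType) (adj : rel V) : simple_graph adj ->
  ~ complete_multipartite adj -> exists u v w, [/\ adj u w, ~~ adj u v & ~~ adj v w].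
Proof.
move=> [irr sym] ncm.
case: (boolP [exists u, exists v, exists w, adj u w && ~~ adj u v && ~~ adj v w]).
  move/existsP=> [u /existsP [v /existsP [w /andP[/andP[h1 h2] h3]]]]; by exists u, v, w.
move=> /negP hn; exfalso; apply: ncm.
have tr : forall u v w, ~~ adj u v -> ~~ adj v w -> ~~ adj u w.
  move=> u v w h1 h2; apply/negP => h3; apply: hn; apply/existsP; exists u.
  apply/existsP; exists v; apply/existsP; exists w; by rewrite h3 h1 h2.
exists (fun u => find (fun x => ~~ adj u x) (enum V)) => u v.
have hasu : forall u, has (fun x => ~~ adj u x) (enum V).
  by move=> x; apply/hasP; exists x; rewrite ?mem_enum ?irr.
case: (boolP (adj u v)) => huv; apply/esym.
  apply/negP => /eqP e.
  have h1 := nth_find u (hasu u); have h2 := nth_find u (hasu v).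
  rewrite -e in h2.
  have h3 : ~~ adj (nth u (enum V) (find (fun x => ~~ adj u x) (enum V))) v.
    by rewrite sym.
  by move: (tr _ _ _ h1 h3); rewrite huv.
apply/negPn/eqP; apply: eq_find => x; apply/idP/idP => h.
  by apply: tr h; rewrite sym.
exact: tr huv h.
Qed.

Lemma sr_reg_sum (R : realType) (V : finType) (adj : rel V) k u :
  degree adj u = k -> \sum_(v in [set: V]) (adj u v)%:R = k%:R :> R.
Proof.
move=> <-; rewrite /degree.
rewrite (eq_bigr (fun v => if adj u v then 1 else 0)); last by move=> v _; case: (adj u v).
rewrite -big_mkcondr sumr_const; congr (_%:R); rewrite cardsE.
by apply: eq_card => v; rewrite unfold_in in_setT.
Qed.

Section Gr.
Variable R : realType.
Variable V : finType.
Local Notation T := [set: V].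

Lemma sr_lin3 (u w v : V) (F : V -> R) :
  \sum_(i in T) ((i == u)%:R + (i == w)%:R - 2 * (i == v)%:R) * F i = F u + F w - 2 * F v.
Proof.
rewrite (eq_bigr (fun i => (i == u)%:R * F i + (i == w)%:R * F i - 2 * ((i == v)%:R * F i))).
  by rewrite sumrB big_split /= -mulr_sumr !sr_sum_delta ?in_setT.
by move=> i _; ring.
Qed.

Lemma sr_sum_sq_ge (z : V -> R) j : z j ^+ 2 <= \sum_(i in T) z i ^+ 2.
Proof.
rewrite (bigD1 j) ?in_setT //= lerDl; apply: sumr_ge0 => i _; exact: sqr_ge0.
Qed.

Definition sr_ker (S : {set V}) (M : V -> V -> R) (z : V -> R) :=
  forall i, i \in S -> \sum_(j in S) M i j * z j = 0.

Lemma sr_ker_comb S M z1 z2 c1 c2 : sr_ker S M z1 -> sr_ker S M z2 ->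
  sr_ker S M (fun j => c1 * z1 j + c2 * z2 j).
Proof.
move=> k1 k2 i iS.
rewrite (eq_bigr (fun j => c1 * (M i j * z1 j) + c2 * (M i j * z2 j))); last by move=> j _; ring.
by rewrite big_split /= -!mulr_sumr k1 // k2 // !mulr0 addr0.
Qed.

Lemma sr_ker_drop S M z i0 : sr_ker S M z -> i0 \in S -> z i0 = 0 -> sr_ker (S :\ i0) M z.
Proof.
move=> kz i0S z0 i /setD1P[_ iS]; have := kz i iS.
by rewrite (big_setD1 i0 i0S) /= z0 mulr0 add0r.
Qed.

Lemma sr_dist_dot m (x y : 'rV[R]_m) :
  \sum_(k < m) (x ord0 k - y ord0 k) ^+ 2 = sr_dotv x x + sr_dotv y y - 2 * sr_dotv x y.
Proof.
rewrite /sr_dotv mulr_sumr -big_split -sumrB /=; apply: eq_bigr => k _; ring.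
Qed.

End Gr.

Lemma sr_bf_ker (R : realType) (V : finType) (S : {set V}) (M : V -> V -> R) x o :
  sr_ker S M o -> sr_bf S M x o = 0.
Proof.
move=> ko; rewrite /sr_bf big1 // => i iS.
rewrite (eq_bigr (fun j => x i * (M i j * o j))); last by move=> j _; ring.
by rewrite -mulr_sumr ko // mulr0.
Qed.

From mathcomp Require Import boolp classical_sets topology normedtype derive.
Import numFieldTopology.Exports numFieldNormedType.Exports.
Local Open Scope classical_set_scope.
Local Open Scope ring_scope.

Lemma sr_evt_aux (R : realType) N (f g h : 'rV[R]_N -> R) :
  continuous f -> continuous g -> continuous h ->
  (forall y, g y = 1 -> h y = 0 -> forall i, -1 <= y ord0 i <= 1) ->
  (exists y, g y = 1 /\ h y = 0) ->
  exists y, [/\ g y = 1, h y = 0 & forall z, g z = 1 -> h z = 0 -> f z <= f y].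
Proof.
move=> cf cg ch bnd [y0 [g0 h0]].
pose A := [set y : 'rV[R]_N | g y = 1 /\ h y = 0].
have Acl : closed A.
  rewrite (_ : A = g @^-1` [set 1] `&` h @^-1` [set 0]); last first.
    by apply/seteqP; split => y /=.
  apply: closedI; apply: preimage_closed.
  - by move=> x _; exact: cg.
  - exact: closed_eq.
  - by move=> x _; exact: ch.
  - exact: closed_eq.
have Aco : compact A.
  have Bco := @rV_compact R N (fun _ => `[-1, 1]%classic) (fun _ => @segment_compact R (-1) 1).
  apply: (subclosed_compact Acl Bco).
  move=> y [gy hy] i /=; rewrite in_itv /=; exact: bnd.
have [y yA ymax] := @EVT_max_rV R N f A (ex_intro _ y0 (conj g0 h0)) Aco
  (continuous_subspaceT cf).
move: yA; rewrite inE => -[gy hy].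
exists y; split => // z gz hz; apply: ymax; by rewrite inE; split.
Qed.

Lemma sr_cont_sum (R : realType) N (J : Type) (r : seq J) (P : pred J)
    (F : J -> 'rV[R]_N -> R) :
  (forall i, continuous (F i)) -> continuous (fun y => \sum_(i <- r | P i) F i y).
Proof.
move=> cF; elim: r => [|x r IH].
  under eq_fun do rewrite big_nil; exact: cst_continuous.
under eq_fun do rewrite big_cons; case: (P x).
  by move=> y; exact: (continuousD (cF x y) (IH y)).
exact: IH.
Qed.

Lemma sr_cont_mul (R : realType) N (F G : 'rV[R]_N -> R) :
  continuous F -> continuous G -> continuous (fun y => F y * G y).
Proof. by move=> cF cG y; exact: (continuousM (cF y) (cG y)). Qed.

Lemma sr_cont_coord (R : realType) N (i : 'I_N) : continuous (fun y : 'rV[R]_N => y ord0 i).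
Proof. exact: coord_continuous. Qed.

Local Close Scope classical_set_scope.

Theorem corollary6p2 (R : realType) (d : nat) (V : finType) (adj : rel V) :
  simple_graph adj ->
  #|V| = d.+2 ->
  regular adj ->
  ~ complete_multipartite adj ->
  spherical_representation R d adj.
Proof.
move=> sg cardV [k regk] ncm.
have [irr sym] := sg.
have [u [v [w [huw nuv nvw]]]] := sr_not_cm_witness sg ncm.
have uw : u != w by apply: contraTneq huw => ->; exact: irr.
have uv : u != v by apply: contraTneq huw => ->; exact: nvw.
have vw : v != w by apply: contraTneq huw => <-; exact: nuv.
pose T := [set: V].
pose a := fun x y : V => (adj x y)%:R : R.
pose N := #|V|.
pose QA := sr_qf T a.
pose nrm := fun z : V -> R => \sum_(i in T) z i ^+ 2.
pose sm := fun z : V -> R => \sum_(i in T) z i.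
pose r2f := fun (y : 'rV[R]_N) (x : V) => y ord0 (enum_rank x).
have nrm_ge0 : forall z, 0 <= nrm z by move=> z; apply: sumr_ge0 => i _; exact: sqr_ge0.
have normz : forall z : V -> R, nrm z != 0 ->
   let c := (Num.sqrt (nrm z))^-1 in
   let y := \row_(i < N) (c * z (enum_val i)) in
   [/\ nrm (r2f y) = 1, sm (r2f y) = c * sm z & QA (r2f y) = c ^+ 2 * QA z].
  move=> z nz c y.
  have ry : forall x, r2f y x = c * z x by move=> x; rewrite /r2f mxE enum_rankK.
  have c2 : c ^+ 2 = (nrm z)^-1 by rewrite /c exprVn sqr_sqrtr.
  split.
  - rewrite /nrm (eq_bigr (fun i => c ^+ 2 * z i ^+ 2)); last by move=> i _; rewrite ry exprMn.
    by rewrite -mulr_sumr c2 mulVf.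
  - by rewrite /sm mulr_sumr; apply: eq_bigr => i _; rewrite ry.
  - rewrite /QA /sr_qf mulr_sumr; apply: eq_bigr => i _; rewrite mulr_sumr.
    by apply: eq_bigr => j _; rewrite !ry; ring.
pose x0 := fun i : V => (i == u)%:R + (i == w)%:R - 2 * (i == v)%:R : R.
have x0u : x0 u = 1 by rewrite /x0 eqxx (negbTE uw) (negbTE uv) /=; ring.
have smx0 : sm x0 = 0.
  rewrite /sm (eq_bigr (fun i => x0 i * 1)); last by move=> i _; rewrite mulr1.
  by rewrite sr_lin3; ring.
have QAx0 : QA x0 = 2.
  rewrite /QA /sr_qf (eq_bigr (fun i => x0 i * (a i u + a i w - 2 * a i v))); last first.
    move=> i _; rewrite -(sr_lin3 u w v (a i)) mulr_sumr; apply: eq_bigr => j _; rewrite /x0; ring.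
  have e1 := negbTE (irr u); have e2 := negbTE (irr v); have e3 := negbTE (irr w).
  have e4 := negbTE nuv; have e5 := negbTE nvw.
  have e6 : adj v u = false by rewrite sym.
  have e7 : adj w v = false by rewrite sym.
  have e8 : adj w u by rewrite sym.
  by rewrite sr_lin3 /a e1 e2 e3 e4 e5 e6 e7 e8 huw /=; ring.
have nx0 : nrm x0 != 0.
  by rewrite gt_eqF //; apply: lt_le_trans (sr_sum_sq_ge x0 u); rewrite x0u expr1n.
have cf : continuous (fun y => QA (r2f y)).
  rewrite /QA /sr_qf /r2f; apply: sr_cont_sum => i; apply: sr_cont_sum => j.
  apply: sr_cont_mul; last exact: cst_continuous.
  by apply: sr_cont_mul; exact: sr_cont_coord.
have cg : continuous (fun y => nrm (r2f y)).
  rewrite /nrm /r2f; apply: sr_cont_sum => i.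
  by apply: sr_cont_mul; exact: sr_cont_coord.
have ch : continuous (fun y => sm (r2f y)).
  rewrite /sm /r2f; apply: sr_cont_sum => i; exact: sr_cont_coord.
have bnd : forall y, nrm (r2f y) = 1 -> sm (r2f y) = 0 -> forall i, -1 <= y ord0 i <= 1.
  move=> y ny _ i; have := sr_sum_sq_ge (r2f y) (enum_val i).
  rewrite -/(nrm _) ny /r2f enum_valK => h.
  by apply/andP; split; nra.
have ne : exists y, nrm (r2f y) = 1 /\ sm (r2f y) = 0.
  have [h1 h2 _] := normz x0 nx0.
  by eexists; split; [exact: h1 | rewrite h2 smx0 mulr0].
have [Y0 [nY sY maxY]] := sr_evt_aux cf cg ch bnd ne.
pose Y := r2f Y0.
pose th := QA Y.
have bound : forall z, sm z = 0 -> QA z <= th * nrm z.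
  move=> z sz; have [n0|nn0] := eqVneq (nrm z) 0.
    have z0 : forall i, z i = 0.
      move=> i; apply/eqP; rewrite -sqrf_eq0 eq_le sqr_ge0 andbT.
      by rewrite -n0 sr_sum_sq_ge.
    rewrite n0 mulr0 /QA /sr_qf big1 // => i _; rewrite big1 // => j _.
    by rewrite z0 !mul0r.
  have [h1 h2 h3] := normz z nn0.
  have := maxY _ h1; rewrite h2 sz mulr0 => /(_ erefl); rewrite h3.
  rewrite exprVn sqr_sqrtr ?nrm_ge0 // => h.
  have np : 0 < nrm z by rewrite lt_def nn0 nrm_ge0.
  have := ler_wpM2l (ltW np) h; rewrite mulrA mulfV // mul1r mulrC; exact.
have th0 : 0 < th.
  have := bound x0 smx0; rewrite QAx0 => h.
  have hn := nrm_ge0 x0; rewrite ltNge; apply/negP => hth.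
  have := le_trans h (mulr_le0_ge0 hth hn); by rewrite leNgt ltr0n.
pose t := th^-1.
have t0 : 0 < t by rewrite invr_gt0.
have tth : t * th = 1 by rewrite mulVf // gt_eqF.
have N0 : (N%:R : R) != 0 by rewrite /N cardV pnatr_eq0.
pose al := (t * k%:R - 1) / N%:R.
pose M := fun x y : V => (x == y)%:R - t * a x y + al.
have sM : sr_symm M by move=> x y; rewrite /M eq_sym /a sym.
have qfM : forall z, sr_qf T M z = nrm z - t * QA z + al * sm z ^+ 2.
  move=> z; rewrite /sr_qf /M /nrm /QA /sr_qf /sm.
  rewrite expr2 big_distrlr /= mulr_sumr mulr_sumr -sumrB -big_split /=.
  apply: eq_bigr => i _.
  rewrite (eq_bigr (fun j => (j == i)%:R * (z i * z j) - t * (z i * z j * a i j)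
                              + al * (z i * z j))); last first.
    by move=> j _; rewrite eq_sym; ring.
  rewrite big_split sumrB /= sr_sum_delta ?finset.in_setT // -!mulr_sumr; ring.
have ker1 : sr_ker T M (fun _ => 1).
  move=> i _; rewrite (eq_bigr (fun j => (j == i)%:R * 1 - t * a i j + al)); last first.
    by move=> j _; rewrite /M eq_sym !mulr1.
  rewrite big_split sumrB /= sr_sum_delta ?finset.in_setT // -mulr_sumr /a.
  rewrite (sr_reg_sum R (regk i)) sumr_const cardsT -/N.
  rewrite /al -mulr_natr; field; exact: N0.
have psdM : sr_psd T M.
  move=> z; pose m := sm z / N%:R; pose y := fun i => z i - m.
  have -> : sr_qf T M z = sr_qf T M (fun i => y i + m * (fun _ => 1) i).
    by rewrite /sr_qf; apply: eq_bigr => i _; apply: eq_bigr => j _; rewrite /y /=; ring.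
  have q1 : sr_qf T M (fun _ => 1) = 0 := sr_bf_ker _ ker1.
  rewrite sr_qf_expand // (sr_bf_ker _ ker1) q1 !mulr0 !addr0.
  have sy : sm y = 0.
    by rewrite /sm /y sumrB sumr_const cardsT -/N -mulr_natr /m -/(sm z) divfK ?subrr.
  rewrite qfM sy expr2 !mulr0 addr0 subr_ge0.
  have := bound y sy => h.
  have := ler_wpM2l (ltW t0) h; rewrite mulrA tth mul1r; exact.
have kerY : sr_ker T M Y.
  apply: sr_psd_kernel sM psdM _; rewrite qfM nY sY -/th tth expr2 !mulr0 addr0.
  by rewrite subrr.
have [i0 [i1 ne01]] : exists i0 i1, Y i0 != Y i1.
  case: (boolP [exists i0, exists i1, Y i0 != Y i1]).
    by move/existsP => [i0 /existsP [i1 h]]; exists i0, i1.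
  move=> /negP hn; exfalso.
  have eq : forall i, Y i = Y u.
    move=> i; apply/eqP; apply: contraT => h; exfalso; apply: hn.
    by apply/existsP; exists i; apply/existsP; exists u.
  have Yu : Y u = 0.
    move: sY; rewrite /sm -/Y (eq_bigr (fun _ => Y u)) ?sumr_const ?cardsT -?/N; last by move=> i _; exact: eq.
    by move/eqP; rewrite -mulr_natr mulf_eq0 (negbTE N0) orbF => /eqP.
  move: nY; rewrite /nrm -/Y (eq_bigr (fun _ => 0)); last by move=> i _; rewrite eq Yu expr0n.
  by rewrite big1 // => /eqP; rewrite eq_sym oner_eq0.
pose w' := fun j => 1 * Y j + (- Y i1) * (fun _ => 1) j.
have kw : sr_ker T M w' := sr_ker_comb 1 (- Y i1) kerY ker1.
have w0 : w' i0 != 0 by rewrite /w' /= mul1r mulr1 subr_eq0.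
have w1 : w' i1 = 0 by rewrite /w' /= mul1r mulr1 subrr.
pose z1 := fun j => 1 * (fun _ => 1) j + (- (w' i0)^-1) * w' j.
have kz1 : sr_ker T M z1 := sr_ker_comb 1 (- (w' i0)^-1) ker1 kw.
have z1i0 : z1 i0 = 0 by rewrite /z1 /= mulNr mulVf // mul1r subrr.
have z1i1 : z1 i1 = 1 by rewrite /z1 /= w1 mulr0 addr0 mul1r.
have n10 : i1 != i0 by apply: contraNneq ne01 => ->.
have i1S : i1 \in T :\ i0 by rewrite in_setD1 n10 finset.in_setT.
have cS2 : (#|T :\ i0 :\ i1| <= d)%N.
  have := cardsD1 i0 T; rewrite finset.in_setT cardsT cardV (cardsD1 i1 (T :\ i0)) i1S.
  by rewrite !add1n => -[->].
have pS2 : sr_psd (T :\ i0 :\ i1) M by apply: sr_psd_sub (finset.subsetT _) psdM.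
have [p2 gp2] := sr_chol sM cS2 pS2.
have z1n : z1 i1 != 0 by rewrite z1i1 oner_neq0.
have [p1 gp1] := sr_gram_extend sM i1S z1n (sr_ker_drop kz1 (finset.in_setT i0) z1i0) gp2.
have [p gp] := sr_gram_extend sM (finset.in_setT i0) w0 kw gp1.
have al1 : 0 < 1 + al.
  have e : 1 + al = (N%:R + t * k%:R - 1) / N%:R by rewrite /al; field.
  have hN : (2 : R) <= N%:R by rewrite /N cardV ler_nat.
  have htk : 0 <= t * k%:R by rewrite mulr_ge0 // ltW.
  rewrite e divr_gt0 //; first lra.
  by rewrite /N cardV ltr0n.
have dpp : forall x, sr_dotv (p x) (p x) = 1 + al.
  by move=> x; rewrite gp ?finset.in_setT // /M eqxx /a (negbTE (irr x)) /=; ring.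
have d2 : forall x y, x != y ->
    \sum_(k0 < d) (p x ord0 k0 - p y ord0 k0) ^+ 2 = 2 + 2 * t * a x y.
  move=> x y nxy; rewrite sr_dist_dot !dpp gp ?finset.in_setT // /M (negbTE nxy) /=; ring.
have ed : forall x y, x != y -> Defs.edist (p x) (p y) = Num.sqrt (2 + 2 * t * a x y).
  by move=> x y nxy; rewrite /Defs.edist d2.
have a21 : Num.sqrt 2 < Num.sqrt (2 + 2 * t).
  rewrite ltr_sqrt; last by lra.
  lra.
exists p; split.
  move=> x y pxy; apply/eqP; apply: contraT => nxy.
  have := d2 x y nxy; rewrite pxy (eq_bigr (fun _ => 0)); last by move=> k0 _; rewrite subrr expr0n.
  rewrite big1 // => h.
  have : 0 < 2 + 2 * t * a x y by rewrite /a; case: (adj x y) => /=; lra.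
  by rewrite -h ltxx.
split.
  exists 0, (Num.sqrt (1 + al)); split; first by rewrite sqrtr_gt0.
  move=> x; rewrite /edist; congr (Num.sqrt _); rewrite -(dpp x).
  by apply: eq_bigr => k0 _; rewrite mxE subr0 expr2.
exists (Num.sqrt (2 + 2 * t)), (Num.sqrt 2); split; first exact: a21.
split.
  move=> x y nxy; rewrite ed // /a; case: (adj x y) => /=.
    by left; rewrite mulr1.
  by right; rewrite mulr0 addr0.
split.
  by exists u, w; split => //; rewrite ed // /a huw mulr1.
split.
  by exists u, v; split => //; rewrite ed // /a (negbTE nuv) mulr0 addr0.
move=> x y nxy; rewrite ed // /a; case: (adj x y) => /=; split => //.
  by rewrite mulr1.
by rewrite mulr0 addr0 => h; move: a21; rewrite h ltxx.
Qed.
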